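(* Let $\mathcal G$ be a synchronous game. There is $C>0$ depending only on $\mathcal G$ such that for every $0<\epsilon\le1$: if $\mathcal S=(\{E^i_a\},\{F^i_a\},|\psi\rangle)$ is an $\epsilon$-perfect quantum strategy for $\mathcal G$ and $\rho=\lambda^2$ is the reduced density matrix of $|\psi\rangle$ on Bob's factor, then $p^i_a\mapsto F^i_a$ is a $C\epsilon^{1/4}$-representation of the synchronous algebra $\mathcal A(\mathcal G)$ with respect to $\|\cdot\|_\rho$. If moreover $\mathcal S$ is a synchronous strategy, then $\|F^i_a\lambda-\lambda F^i_a\|_F\le C\epsilon^{1/2}$ for all $(i,a)$.
   Context: A game $\mathcal{G}=(\eta,I,J,A,B,V)$ has finite input sets, output sets, a distribution $\eta$ on $I\times J$ and predicate $V$. A synchronous game has $I=J$, $A=B$, $V(a,b|i,i)=0$ for $a\ne b$, and $\eta(i,j)>0$ for all $i,j$. A quantum strategy consists of a finite-dimensional Hilbert space $H$, PVMs $\{E^i_a\}_a$ (Alice) and $\{F^i_a\}_a$ (Bob) on $H$ and a unit vector $|\psi\rangle\in H\otimes H$, written $|\psi\rangle=\sum_t|t\rangle\otimes\lambda|t\rangle$ for an orthonormal basis $\{|t\rangle\}$ and positive semidefinite $\lambda$ with $\mathrm{tr}(\lambda^2)=1$ (so $\rho=\lambda^2$); $\overline X$ is entrywise conjugation in this basis. It is $\epsilon$-perfect if $\sum_{i,j}\eta(i,j)\sum_{a,b}V(a,b|i,j)\langle\psi|E^i_a\otimes F^j_b|\psi\rangle\ge1-\epsilon$, and synchronous if $E^i_a=\overline{F^i_a}$.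 Norms: $\|A\|_F=\mathrm{tr}(A^*A)^{1/2}$, $\|T\|_\rho=\|T\rho^{1/2}\|_F$. The synchronous algebra $\mathcal A(\mathcal G)$ is the finitely presented $*$-algebra with generators $p^i_a$ and relations $(p^i_a)^2=p^i_a=(p^i_a)^*$, $\sum_ap^i_a=1$ for each $i$, $p^i_ap^j_b=0$ whenever $V(a,b|i,j)=0$. An $\epsilon$-representation with respect to a seminorm $\|\cdot\|$ is an assignment of operators to generators (extended to a unital $*$-homomorphism of the free $*$-algebra) under which every defining relation $r$ (a relation $a=b$ meaning $r=a-b$) satisfies $\|\phi(r)\|\le\epsilon$. *)

(* Defs.v *)
From HB Require Import structures.
From mathcomp Require Import all_boot all_order all_algebra.
From mathcomp Require Import complex mxtens.
From mathcomp Require Import reals.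
Set Implicit Arguments. Unset Strict Implicit. Unset Printing Implicit Defensive.
Import Order.TTheory GRing.Theory Num.Theory.
Local Open Scope ring_scope.

Definition adjmx (C : numClosedFieldType) m n (X : 'M[C]_(m, n)) : 'M[C]_(n, m) :=
  (map_mx Num.conj X)^T.
Definition conjmx (C : numClosedFieldType) m n (X : 'M[C]_(m, n)) : 'M[C]_(m, n) :=
  map_mx Num.conj X.

Definition frob (C : numClosedFieldType) n (X : 'M[C]_n) : C :=
  sqrtC (\tr (adjmx X *m X)).

(* the rho-seminorm ||T||_rho = ||T rho^{1/2}||_F, with rho^{1/2} = lambda *)
Definition rho_norm (C : numClosedFieldType) n (lam : 'M[C]_n) (T : 'M[C]_n) : C :=
  frob (T *m lam).

Definition psd (C : numClosedFieldType) n (X : 'M[C]_n) : Prop :=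
  adjmx X = X /\ forall x : 'cV[C]_n, 0 <= (adjmx x *m X *m x) 0 0.

Definition is_PVM (C : numClosedFieldType) (A : finType) n (P : A -> 'M[C]_n) : Prop :=
  (forall a, P a *m P a = P a) /\ (forall a, adjmx (P a) = P a) /\
  \sum_a P a = 1%:M.

Definition synchronous_game (C : numClosedFieldType) (I A : finType)
    (eta : I -> I -> C) (V : A -> A -> I -> I -> bool) : Prop :=
  (forall i j, 0 < eta i j) /\ \sum_i \sum_j eta i j = 1 /\
  (forall i a b, a != b -> V a b i i = false).

Definition psi_of (C : numClosedFieldType) n (lam : 'M[C]_n) : 'M[C]_(n * n, 1 * 1) :=
  \sum_(t < n) (delta_mx t 0 : 'cV[C]_n) *t (lam *m (delta_mx t 0 : 'cV[C]_n)).

Definition corr (C : numClosedFieldType) n (lam : 'M[C]_n) (X Y : 'M[C]_n) : C :=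
  (adjmx (psi_of lam) *m (X *t Y) *m psi_of lam) 0 0.

Definition quantum_strategy (C : numClosedFieldType) (I A : finType) n
    (E F : I -> A -> 'M[C]_n) (lam : 'M[C]_n) : Prop :=
  (forall i, is_PVM (E i)) /\ (forall i, is_PVM (F i)) /\
  psd lam /\ \tr (lam *m lam) = 1.

Definition win_prob (C : numClosedFieldType) (I A : finType)
    (eta : I -> I -> C) (V : A -> A -> I -> I -> bool) n
    (E F : I -> A -> 'M[C]_n) (lam : 'M[C]_n) : C :=
  \sum_i \sum_j eta i j * \sum_a \sum_b (V a b i j)%:R * corr lam (E i a) (F j b).

Definition eps_perfect (C : numClosedFieldType) (I A : finType)
    (eta : I -> I -> C) (V : A -> A -> I -> I -> bool) n
    (E F : I -> A -> 'M[C]_n) (lam : 'M[C]_n) (eps : C) : Prop :=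
  1 - eps <= win_prob eta V E F lam.

Definition sync_strategy (C : numClosedFieldType) (I A : finType) n
    (E F : I -> A -> 'M[C]_n) : Prop :=
  forall i a, E i a = conjmx (F i a).

Definition eps_representation (C : numClosedFieldType) (I A : finType)
    (V : A -> A -> I -> I -> bool) n (nrm : 'M[C]_n -> C)
    (P : I -> A -> 'M[C]_n) (eps : C) : Prop :=
  (forall i a, nrm (P i a *m P i a - P i a) <= eps) /\
  (forall i a, nrm (P i a - adjmx (P i a)) <= eps) /\
  (forall i, nrm (\sum_a P i a - 1%:M) <= eps) /\
  (forall i j a b, V a b i j = false -> nrm (P i a *m P j b) <= eps).

(* Main.v *)
Require Import Defs.
From HB Require Import structures.
From mathcomp Require Import all_boot all_order all_algebra.
From mathcomp Require Import complex mxtens.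
From mathcomp Require Import reals.
From mathcomp Require Import ring.
Import Order.TTheory GRing.Theory Num.Theory.
Local Open Scope ring_scope.
Set Implicit Arguments. Unset Strict Implicit. Unset Printing Implicit Defensive.



Section Adj.
Variable C : numClosedFieldType.

Lemma adjmxM m n p (X : 'M[C]_(m, n)) (Y : 'M[C]_(n, p)) :
  adjmx (X *m Y) = adjmx Y *m adjmx X.
Proof. by rewrite /adjmx map_mxM trmx_mul. Qed.

Lemma adjmxK m n (X : 'M[C]_(m, n)) : adjmx (adjmx X) = X.
Proof. by apply/matrixP=> i j; rewrite !mxE conjCK. Qed.

Lemma adjmxD m n (X Y : 'M[C]_(m, n)) : adjmx (X + Y) = adjmx X + adjmx Y.
Proof. by apply/matrixP=> i j; rewrite !mxE rmorphD. Qed.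

Lemma adjmxN m n (X : 'M[C]_(m, n)) : adjmx (- X) = - adjmx X.
Proof. by apply/matrixP=> i j; rewrite !mxE rmorphN. Qed.

Lemma adjmxB m n (X Y : 'M[C]_(m, n)) : adjmx (X - Y) = adjmx X - adjmx Y.
Proof. by rewrite adjmxD adjmxN. Qed.

Lemma adjmxZ m n a (X : 'M[C]_(m, n)) : adjmx (a *: X) = a^* *: adjmx X.
Proof. by apply/matrixP=> i j; rewrite !mxE rmorphM. Qed.

Lemma adjmx0 m n : adjmx (0 : 'M[C]_(m, n)) = 0.
Proof. by apply/matrixP=> i j; rewrite !mxE rmorph0. Qed.

Lemma adjmx1 n : adjmx (1%:M : 'M[C]_n) = 1%:M.
Proof. by apply/matrixP=> i j; rewrite !mxE rmorph_nat eq_sym. Qed.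

Lemma adjmx_sum m n (I : finType) (F : I -> 'M[C]_(m, n)) :
  adjmx (\sum_i F i) = \sum_i adjmx (F i).
Proof.
apply/matrixP=> i j; rewrite !mxE !summxE rmorph_sum; apply: eq_bigr=> k _.
by rewrite !mxE.
Qed.

Lemma tr_adj n (X : 'M[C]_n) : \tr (adjmx X) = (\tr X)^*.
Proof. by rewrite /adjmx mxtrace_tr /mxtrace rmorph_sum; apply: eq_bigr=> i _; rewrite mxE. Qed.

Definition ip n (X Y : 'M[C]_n) := \tr (adjmx X *m Y).

Lemma ip_conj n (X Y : 'M[C]_n) : (ip X Y)^* = ip Y X.
Proof. by rewrite /ip -tr_adj adjmxM adjmxK. Qed.

Lemma ipE n (X Y : 'M[C]_n) : ip X Y = \sum_i \sum_j (X j i)^* * Y j i.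
Proof. by rewrite /ip /mxtrace; apply: eq_bigr=> i _; rewrite mxE; apply: eq_bigr => j _; rewrite !mxE. Qed.

Lemma ip_ge0 n (X : 'M[C]_n) : 0 <= ip X X.
Proof.
rewrite ipE; apply: sumr_ge0=> i _; apply: sumr_ge0=> j _.
by rewrite mulrC mul_conjC_ge0.
Qed.

Lemma ip_real n (X : 'M[C]_n) : (ip X X)^* = ip X X.
Proof. exact: geC0_conj (ip_ge0 X). Qed.

Lemma ipDl n (X Y Z : 'M[C]_n) : ip (X + Y) Z = ip X Z + ip Y Z.
Proof. by rewrite /ip adjmxD mulmxDl mxtraceD. Qed.
Lemma ipDr n (X Y Z : 'M[C]_n) : ip Z (X + Y) = ip Z X + ip Z Y.
Proof. by rewrite /ip mulmxDr mxtraceD. Qed.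
Lemma ipNl n (X Z : 'M[C]_n) : ip (- X) Z = - ip X Z.
Proof. by rewrite /ip adjmxN mulNmx raddfN. Qed.
Lemma ipNr n (X Z : 'M[C]_n) : ip Z (- X) = - ip Z X.
Proof. by rewrite /ip mulmxN raddfN. Qed.
Lemma ipBl n (X Y Z : 'M[C]_n) : ip (X - Y) Z = ip X Z - ip Y Z.
Proof. by rewrite ipDl ipNl. Qed.
Lemma ipBr n (X Y Z : 'M[C]_n) : ip Z (X - Y) = ip Z X - ip Z Y.
Proof. by rewrite ipDr ipNr. Qed.
Lemma ipZl n a (X Z : 'M[C]_n) : ip (a *: X) Z = a^* * ip X Z.
Proof. by rewrite /ip adjmxZ -scalemxAl mxtraceZ. Qed.
Lemma ipZr n a (X Z : 'M[C]_n) : ip Z (a *: X) = a * ip Z X.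
Proof. by rewrite /ip -scalemxAr mxtraceZ. Qed.

Lemma ip_adj n (X : 'M[C]_n) : ip (adjmx X) (adjmx X) = ip X X.
Proof. by rewrite /ip adjmxK mxtrace_mulC. Qed.

End Adj.



Section Norms.
Variable C : numClosedFieldType.
Variable n : nat.
Implicit Types X Y U W P : 'M[C]_n.

Lemma ip_hermL P X Y : adjmx P = P -> ip (P *m X) Y = ip X (P *m Y).
Proof. by move=> hP; rewrite /ip adjmxM hP mulmxA. Qed.

Lemma ip_proj_le P X : P *m P = P -> adjmx P = P ->
  ip (P *m X) (P *m X) <= ip X X.
Proof.
move=> hPP hP.
have e1 : ip (P *m X) (P *m X) = ip X (P *m X) by rewrite ip_hermL // mulmxA hPP.
have e2 : ip (P *m X) X = ip X (P *m X) by rewrite ip_hermL.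
have := ip_ge0 (X - P *m X).
rewrite ipBl !ipBr e1 e2 => h.
by rewrite -subr_ge0; move: h; congr (_ <= _); ring.
Qed.

Lemma ip_proj_le_r P X : P *m P = P -> adjmx P = P ->
  ip (X *m P) (X *m P) <= ip X X.
Proof.
move=> hPP hP; rewrite -ip_adj adjmxM hP -[X in _ <= X]ip_adj.
exact: ip_proj_le.
Qed.

Lemma ip_parB X Y : ip (X - Y) (X - Y) <= 2 * ip X X + 2 * ip Y Y.
Proof.
have := ip_ge0 (X + Y).
rewrite ipBl !ipBr ipDl !ipDr => h.
by rewrite -subr_ge0; move: h; congr (_ <= _); ring.
Qed.

Lemma S_bound (t k : C) U W : 0 < t -> 0 <= k ->
  ip U U <= k * t ^+ 2 -> ip W W <= 1 ->
  ip U W + ip W U <= (k + 1) * t /\ - (ip U W + ip W U) <= (k + 1) * t.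
Proof.
move=> t0 k0 hU hW.
have tc : t^* = t by apply: geC0_conj; exact: ltW.
have key : forall s : C, s^* = s -> s ^+ 2 = t ^+ 2 ->
   s * (ip U W + ip W U) <= (k + 1) * t * t.
  move=> s sc s2.
  have := ip_ge0 (U - s *: W).
  rewrite ipBl !ipBr !ipZl !ipZr sc => h.
  have h2 : s * (ip U W + ip W U) <= ip U U + t ^+ 2 * ip W W.
    by rewrite -subr_ge0 -s2; move: h; congr (_ <= _); ring.
  apply: (le_trans h2).
  have : ip U U + t ^+ 2 * ip W W <= k * t ^+ 2 + t ^+ 2 * 1.
    by apply: lerD => //; apply: ler_wpM2l => //; rewrite exprn_ge0 // ltW.
  by move/le_trans; apply; rewrite le_eqVlt; apply/orP; left; apply/eqP; ring.
split.
  have := key t tc erefl.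
  by rewrite [t * (_ + _)]mulrC ler_pM2r.
have nc : (- t)^* = - t by rewrite rmorphN; exact: (congr1 (fun x => - x) tc).
have := key (- t) nc (sqrrN t).
by rewrite mulNr -mulrN mulrC ler_pM2r.
Qed.

End Norms.



Section Corr.
Variable C : numClosedFieldType.

Lemma adjmx_tens m n p q (A : 'M[C]_(m, n)) (B : 'M[C]_(p, q)) :
  adjmx (A *t B) = adjmx A *t adjmx B.
Proof. by rewrite /adjmx map_mxT trmx_tens. Qed.

Lemma adj_delta m n (i : 'I_m) (j : 'I_n) :
  adjmx (delta_mx i j : 'M[C]_(m, n)) = delta_mx j i.
Proof. by apply/matrixP=> a b; rewrite !mxE rmorph_nat andbC. Qed.

Lemma tens11 (A B : 'M[C]_(1, 1)) : (A *t B) 0 0 = A 0 0 * B 0 0.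
Proof. by rewrite mxE; case: (mxtens_unindex _) => a b /=; rewrite [a]ord1 [b]ord1. Qed.

Lemma delta_entry n (M : 'M[C]_n) (s t : 'I_n) :
  ((delta_mx 0 s : 'M[C]_(1, n)) *m M *m (delta_mx t 0 : 'M[C]_(n, 1))) 0 0 = M s t.
Proof. by rewrite -rowE -colE !mxE. Qed.

Lemma trTE n (X M : 'M[C]_n) :
  \tr (X^T *m M) = \sum_s \sum_t X s t * M s t.
Proof.
rewrite /mxtrace exchange_big /=.
rewrite (eq_bigr (fun i => \sum_j X j i * M j i)); last first.
  by move=> i _; rewrite mxE; apply: eq_bigr=> j _; rewrite mxE.
by rewrite exchange_big.
Qed.

Lemma corrE n (lam X Y : 'M[C]_n) :
  corr lam X Y = \tr (X^T *m (adjmx lam *m Y *m lam)).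
Proof.
rewrite /corr /psi_of adjmx_sum mulmx_suml mulmx_suml summxE.
rewrite trTE; apply: eq_bigr => s _.
rewrite mulmx_sumr summxE; apply: eq_bigr => t _.
rewrite adjmx_tens !tensmx_mul tens11 adjmxM !adj_delta delta_entry.
by rewrite -(delta_entry (adjmx lam *m Y *m lam)) !mulmxA.
Qed.

End Corr.



Lemma single_le (C : numDomainType) (T : finType) (f : T -> C) (x : T) :
  (forall y, 0 <= f y) -> f x <= \sum_y f y.
Proof. by move=> h; rewrite (bigD1 x) //= lerDl sumr_ge0. Qed.

Section Strat.
Variable C : numClosedFieldType.
Variables (I A : finType) (n : nat).
Variables (E F : I -> A -> 'M[C]_n) (lam : 'M[C]_n).
Hypothesis hE : forall i, is_PVM (E i).
Hypothesis hF : forall i, is_PVM (F i).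
Hypothesis hlam : adjmx lam = lam.
Hypothesis htr : \tr (lam *m lam) = 1.

Definition G i a := (E i a)^T.

Lemma adjmx_tr m p (X : 'M[C]_(m, p)) : adjmx (X^T) = (adjmx X)^T.
Proof. by apply/matrixP=> a b; rewrite !mxE. Qed.

Lemma GG i a : G i a *m G i a = G i a.
Proof. by rewrite /G -trmx_mul; case: (hE i) => -> _. Qed.
Lemma Gh i a : adjmx (G i a) = G i a.
Proof. by rewrite /G adjmx_tr; case: (hE i) => _ [-> _]. Qed.
Lemma Gs i : \sum_a G i a = 1%:M.
Proof.
case: (hE i) => _ [_ hs]; rewrite /G -trmx1 -hs.
by apply/matrixP=> x y; rewrite !(mxE, summxE); apply: eq_bigr=> k _; rewrite mxE.
Qed.
Lemma FF i a : F i a *m F i a = F i a.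
Proof. by case: (hF i) => ->. Qed.
Lemma Fh i a : adjmx (F i a) = F i a.
Proof. by case: (hF i) => _ [-> _]. Qed.
Lemma Fs i : \sum_a F i a = 1%:M.
Proof. by case: (hF i) => _ [_ ->]. Qed.

Definition cc i j a b := \tr (G i a *m lam *m F j b *m lam).

Lemma corr_cc i j a b : corr lam (E i a) (F j b) = cc i j a b.
Proof. by rewrite corrE hlam /cc !mulmxA. Qed.

Lemma cc_ip i j a b :
  cc i j a b = ip (G i a *m lam *m F j b) (G i a *m lam *m F j b).
Proof.
rewrite /ip !adjmxM Fh Gh hlam.
rewrite !mulmxA -[F j b *m lam *m G i a *m G i a]mulmxA GG.
rewrite mxtrace_mulC !mulmxA FF.
rewrite -!mulmxA mxtrace_mulC !mulmxA /cc.
by rewrite -!mulmxA mxtrace_mulC !mulmxA.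
Qed.

Lemma cc_ge0 i j a b : 0 <= cc i j a b.
Proof. by rewrite cc_ip ip_ge0. Qed.

Lemma cc_sum i j : \sum_a \sum_b cc i j a b = 1.
Proof.
rewrite -htr /cc.
have -> : lam *m lam = (\sum_a G i a) *m lam *m (\sum_b F j b) *m lam.
  by rewrite Gs Fs mul1mx mulmx1.
rewrite mulmx_suml mulmx_suml mulmx_suml raddf_sum; apply: eq_bigr => a _.
by rewrite mulmx_sumr mulmx_suml raddf_sum.
Qed.

Lemma ip_lam : ip lam lam = 1.
Proof. by rewrite /ip hlam. Qed.

Lemma ip_Flam j b : ip (F j b *m lam) (F j b *m lam) <= 1.
Proof. by rewrite -ip_lam; apply: ip_proj_le; [apply: FF | apply: Fh]. Qed.

Lemma ip_FFlam i j a b :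
  ip (F i a *m F j b *m lam) (F i a *m F j b *m lam) <= 1.
Proof.
rewrite -mulmxA; apply: le_trans (ip_Flam j b).
by apply: ip_proj_le; [apply: FF | apply: Fh].
Qed.

Definition D i a := G i a *m lam - lam *m F i a.

Lemma D_sum i a : D i a = \sum_b (G i a *m lam *m F i b - G i b *m lam *m F i a).
Proof.
rewrite sumrB -mulmx_sumr Fs mulmx1.
rewrite (eq_bigr (fun b => G i b *m (lam *m F i a))); last by move=> b _; rewrite mulmxA.
by rewrite -mulmx_suml Gs mul1mx.
Qed.

Lemma ip0 : ip (0 : 'M[C]_n) 0 = 0.
Proof. by rewrite /ip mulmx0 mxtrace0. Qed.

Lemma ipNN (X : 'M[C]_n) : ip (- X) (- X) = ip X X.
Proof. by rewrite ipNl ipNr opprK. Qed.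

Lemma sum_bound (T : Type) (r : seq T) (M : T -> 'M[C]_n) (c : C) :
  0 <= c -> (forall b, ip (M b) (M b) <= c) ->
  ip (\sum_(b <- r) M b) (\sum_(b <- r) M b) <= 4 ^+ size r * c.
Proof.
move=> c0 hM; elim: r => [|x r IH]; first by rewrite big_nil ip0 expr0 mul1r.
rewrite big_cons.
have := ip_parB (M x) (- \sum_(b <- r) M b); rewrite opprK ipNN => h.
apply: (le_trans h); rewrite /= exprS.
have h4 : 1 <= (4 : C) ^+ size r by apply: exprn_ege1; rewrite ler1n.
have : 2 * ip (M x) (M x) + 2 * ip (\sum_(b <- r) M b) (\sum_(b <- r) M b)
    <= 2 * (4 ^+ size r * c) + 2 * (4 ^+ size r * c).
  apply: lerD; apply: ler_wpM2l => //; apply: (le_trans (hM x)).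
  by rewrite -[X in X <= _]mul1r ler_wpM2r.
by move/le_trans; apply; rewrite le_eqVlt; apply/orP; left; apply/eqP; ring.
Qed.

Lemma mulmx_idem (X P : 'M[C]_n) : P *m P = P -> X *m P *m P = X *m P.
Proof. by move=> h; rewrite -mulmxA h. Qed.

Lemma key_id i j a b :
  let X := F i a *m F j b *m lam in
  let D1 := F j b *m lam - lam *m G j b in
  let D3 := F i a *m lam - lam *m G i a in
  let Y := F j b *m F i a *m lam in
  let W := F j b *m lam in
  ip X X = cc i j a b + ip D1 X - ip Y D1 + ip D3 W.
Proof.
move=> X D1 D3 Y W.
have cyc : \tr (G j b *m lam *m F i a *m F j b *m lam) =
           \tr (lam *m F i a *m F j b *m lam *m G j b).
  by rewrite -!mulmxA mxtrace_mulC !mulmxA.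
rewrite /X /D1 /D3 /Y /W /ip /cc.
rewrite !(adjmxM, adjmxB) !Fh !Gh hlam.
rewrite !(mulmxBl, mulmxBr) !raddfB /= !mulmxA.
rewrite !(mulmx_idem _ (FF i a)) !(mulmx_idem _ (FF j b)) cyc.
ring.
Qed.

End Strat.

Section Game.
Variable C : numClosedFieldType.
Variables (I A : finType).
Variables (eta : I -> I -> C) (V : A -> A -> I -> I -> bool).
Hypothesis game : synchronous_game eta V.

Definition S0 := \sum_i \sum_j (eta i j)^-1.
Definition K1 := 4 ^+ size (index_enum A) * (4 * S0).
Definition K2 := S0 + 2 * (K1 + 1).
Definition Cst := sqrtC K1 + sqrtC K2.

Lemma eta_gt0 i j : 0 < eta i j.
Proof. by case: game. Qed.

Lemma S0_ge0 : 0 <= S0.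
Proof. by apply: sumr_ge0=> i _; apply: sumr_ge0=> j _; rewrite invr_ge0 ltW // eta_gt0. Qed.

Lemma inv_le_S0 i j : (eta i j)^-1 <= S0.
Proof.
have h : forall i j, 0 <= (eta i j)^-1 by move=> x y; rewrite invr_ge0 ltW // eta_gt0.
have h1 : (eta i j)^-1 <= \sum_j0 (eta i j0)^-1.
  exact: (@single_le _ _ (fun j => (eta i j)^-1) j (h i)).
apply: (le_trans h1).
apply: (@single_le _ _ (fun i => \sum_j (eta i j)^-1) i).
by move=> y; apply: sumr_ge0=> z _.
Qed.

Lemma K1_ge0 : 0 <= K1.
Proof. by rewrite /K1 mulr_ge0 ?exprn_ge0 ?mulr_ge0 ?S0_ge0. Qed.

Lemma K2_gt0 : 0 < K2.
Proof.
by rewrite /K2 ltr_wpDl ?S0_ge0 // mulr_gt0 // ltr_wpDl ?K1_ge0.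
Qed.

Lemma Cst_gt0 : 0 < Cst.
Proof. by rewrite /Cst ltr_wpDl ?sqrtC_ge0 ?K1_ge0 // sqrtC_gt0 K2_gt0. Qed.

End Game.



Lemma eq_le_ (C : numDomainType) (x y : C) : x = y -> x <= y.
Proof. by move->. Qed.

Section Final.
Variable C : numClosedFieldType.
Variables (I A : finType).
Variables (eta : I -> I -> C) (V : A -> A -> I -> I -> bool).
Hypothesis game : synchronous_game eta V.
Variables (n : nat) (E F : I -> A -> 'M[C]_n) (lam : 'M[C]_n).
Hypothesis hE : forall i, is_PVM (E i).
Hypothesis hF : forall i, is_PVM (F i).
Hypothesis hlam : adjmx lam = lam.
Hypothesis htr : \tr (lam *m lam) = 1.
Variable eps : C.
Hypothesis eps0 : 0 < eps.
Hypothesis eps1 : eps <= 1.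
Hypothesis hperf : eps_perfect eta V E F lam eps.

Local Notation cc := (cc E F lam).
Local Notation S0 := (S0 eta).

Lemma loss_eq :
  \sum_i \sum_j eta i j * (\sum_a \sum_b (1 - (V a b i j)%:R) * cc i j a b)
  = 1 - win_prob eta V E F lam.
Proof.
rewrite /win_prob.
have heq : forall i j, \sum_a \sum_b (1 - (V a b i j)%:R) * cc i j a b
   = 1 - \sum_a \sum_b (V a b i j)%:R * corr lam (E i a) (F j b).
  move=> i j; rewrite -[X in _ = X - _](cc_sum hE hF htr i j) -sumrB; apply: eq_bigr=> a _.
  rewrite -sumrB; apply: eq_bigr=> b _.
  by rewrite corr_cc // mulrBl mul1r.
case: game => _ [hs _].
rewrite -[X in _ = X - _]hs -sumrB; apply: eq_bigr=> i _.
by rewrite -sumrB; apply: eq_bigr=> j _; rewrite heq mulrBr mulr1.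
Qed.

Lemma cc_bound i j a b : V a b i j = false -> cc i j a b <= eps * S0.
Proof.
move=> hV.
have hnn : forall i j a b, 0 <= (1 - (V a b i j)%:R) * cc i j a b.
  move=> x y u v; rewrite mulr_ge0 ?cc_ge0 //.
  by case: (V u v x y); rewrite /= ?mulr1n ?mulr0n ?subrr ?subr0 ?ler01.
have hin : forall x y, 0 <= \sum_a \sum_b (1 - (V a b x y)%:R) * cc x y a b.
  by move=> x y; apply: sumr_ge0=> u _; apply: sumr_ge0=> v _.
have etage : forall x y, 0 <= eta x y by move=> x y; apply: ltW; exact: (eta_gt0 game).
have h1 : eta i j * cc i j a b <= eps.
  apply: le_trans (_ : _ <= 1 - win_prob eta V E F lam) _; last first.
    by rewrite lerBlDr addrC -lerBlDr.
  rewrite -loss_eq.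
  have t1 : cc i j a b <= \sum_a \sum_b (1 - (V a b i j)%:R) * cc i j a b.
    have : (1 - (V a b i j)%:R) * cc i j a b <= \sum_b (1 - (V a b i j)%:R) * cc i j a b.
      exact: (@single_le _ _ (fun b => (1 - (V a b i j)%:R) * cc i j a b) b (hnn i j a)).
    rewrite hV subr0 mul1r => /le_trans; apply.
    apply: (@single_le _ _ (fun a => \sum_b (1 - (V a b i j)%:R) * cc i j a b) a).
    by move=> u; apply: sumr_ge0=> v _.
  apply: le_trans (ler_wpM2l (etage i j) t1) _.
  have : eta i j * (\sum_a \sum_b (1 - (V a b i j)%:R) * cc i j a b) <=
     \sum_j0 eta i j0 * (\sum_a \sum_b (1 - (V a b i j0)%:R) * cc i j0 a b).
    apply: (@single_le _ _ (fun j0 => eta i j0 * (\sum_a \sum_b (1 - (V a b i j0)%:R) * cc i j0 a b)) j).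
    by move=> y; rewrite mulr_ge0.
  move/le_trans; apply.
  apply: (@single_le _ _ (fun i0 => \sum_j0 eta i0 j0 * (\sum_a \sum_b (1 - (V a b i0 j0)%:R) * cc i0 j0 a b)) i).
  by move=> x; apply: sumr_ge0=> y _; rewrite mulr_ge0.
have e0 : 0 < eta i j by exact: (eta_gt0 game).
have h2 : cc i j a b <= eps * (eta i j)^-1.
  rewrite -(ler_pM2l e0) mulrA [eta i j * eps]mulrC -mulrA divff ?mulr1 //.
  by rewrite gt_eqF.
apply: (le_trans h2); apply: ler_wpM2l; first exact: ltW.
exact: (inv_le_S0 game).
Qed.

Local Notation K1 := (K1 A eta).
Local Notation K2 := (K2 A eta).
Local Notation Cst := (Cst A eta).

Lemma conjD_ (x y : C) : (x + y)^* = x^* + y^*.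
Proof. exact: rmorphD. Qed.
Lemma conjB_ (x y : C) : (x - y)^* = x^* - y^*.
Proof. exact: rmorphB. Qed.

Lemma eps_ge0 : 0 <= eps. Proof. exact: ltW. Qed.

Lemma D_bound i a : ip (D E F lam i a) (D E F lam i a) <= K1 * eps.
Proof.
rewrite (D_sum lam hE hF i a).
have c0 : 0 <= 4 * (eps * S0).
  by rewrite mulr_ge0 ?ler0n // mulr_ge0 ?(S0_ge0 game) // ltW.
have hM : forall b, ip (G E i a *m lam *m F i b - G E i b *m lam *m F i a)
   (G E i a *m lam *m F i b - G E i b *m lam *m F i a) <= 4 * (eps * S0).
  move=> b; case: (eqVneq b a) => [->|nba]; first by rewrite subrr ip0.
  apply: le_trans (ip_parB _ _) _.
  rewrite -!(cc_ip hE hF hlam).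
  case: game => _ [_ hg].
  have nab : a != b by rewrite eq_sym.
  have h1 := cc_bound (hg i a b nab).
  have h2 := cc_bound (hg i b a nba).
  apply: le_trans (lerD (ler_wpM2l _ h1) (ler_wpM2l _ h2)) _; rewrite ?ler0n //.
  by apply: eq_le_; ring.
apply: le_trans (sum_bound (index_enum A) c0 hM) _.
by apply: eq_le_; rewrite /K1; ring.
Qed.

Lemma sync_part : sync_strategy E F ->
  forall i a, frob (F i a *m lam - lam *m F i a) <= Cst * sqrtC eps.
Proof.
move=> hs i a.
have GF : G E i a = F i a by rewrite /G hs; exact: (Fh hF i a).
have -> : F i a *m lam - lam *m F i a = D E F lam i a by rewrite /D GF.
change (sqrtC (ip (D E F lam i a) (D E F lam i a)) <= Cst * sqrtC eps).
apply: le_trans (_ : _ <= sqrtC (K1 * eps)) _.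
  have K1e : 0 <= K1 * eps := mulr_ge0 (K1_ge0 game) eps_ge0.
  rewrite ler_sqrtC ?nnegrE ?ip_ge0 ?K1e //.
  exact: D_bound.
rewrite sqrtCM ?nnegrE ?(K1_ge0 game) ?eps_ge0 //.
rewrite ler_wpM2r ?sqrtC_ge0 ?eps_ge0 //.
by rewrite /Cst lerDl sqrtC_ge0 ltW // (K2_gt0 game).
Qed.

Lemma X_bound i j a b : V a b i j = false ->
  ip (F i a *m F j b *m lam) (F i a *m F j b *m lam) <= K2 * sqrtC eps.
Proof.
move=> hV.
set t := sqrtC eps.
have t0 : 0 < t by rewrite sqrtC_gt0.
have tt : t ^+ 2 = eps by rewrite sqrtCK.
have t1 : t <= 1 by rewrite -sqrtC1 ler_sqrtC ?nnegrE ?ler01 ?eps_ge0.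
have epst : eps <= t.
  by rewrite -tt expr2 -[X in _ <= X]mulr1 ler_wpM2l // ltW.
have K1ge := K1_ge0 game.
have D1b : ip (F j b *m lam - lam *m G E j b) (F j b *m lam - lam *m G E j b) <= K1 * t ^+ 2.
  have -> : F j b *m lam - lam *m G E j b = - adjmx (D E F lam j b).
    by rewrite /D adjmxB !adjmxM (Gh hE) (Fh hF) hlam opprB.
  by rewrite ipNN ip_adj tt; exact: D_bound.
have D3b : ip (F i a *m lam - lam *m G E i a) (F i a *m lam - lam *m G E i a) <= K1 * t ^+ 2.
  have -> : F i a *m lam - lam *m G E i a = - adjmx (D E F lam i a).
    by rewrite /D adjmxB !adjmxM (Gh hE) (Fh hF) hlam opprB.
  by rewrite ipNN ip_adj tt; exact: D_bound.
have k := key_id hE hF hlam i j a b; simpl in k.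
set X := F i a *m F j b *m lam in k *.
set D1 := F j b *m lam - lam *m G E j b in k D1b.
set D3 := F i a *m lam - lam *m G E i a in k D3b.
set Y := F j b *m F i a *m lam in k.
set W := F j b *m lam in k.
have ccr : (cc i j a b)^* = cc i j a b by rewrite (cc_ip hE hF hlam) ip_real.
have k' : ip X X = cc i j a b + ip X D1 - ip D1 Y + ip W D3.
  by rewrite -[LHS]ip_real k conjD_ conjB_ conjD_ ccr !ip_conj.
have e2 : 2 * ip X X = 2 * cc i j a b + (ip D1 X + ip X D1) + - (ip D1 Y + ip Y D1)
   + (ip D3 W + ip W D3).
  transitivity (ip X X + ip X X); first by ring.
  by rewrite {1}k {1}k'; ring.
have b1 := (S_bound t0 K1ge D1b (ip_FFlam hF hlam htr i j a b)).1.
have b2 := (S_bound t0 K1ge D1b (ip_FFlam hF hlam htr j i b a)).2.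
have b3 := (S_bound t0 K1ge D3b (ip_Flam hF hlam htr j b)).1.
have bc : 2 * cc i j a b <= 2 * (t * S0).
  rewrite ler_wpM2l ?ler0n //; apply: (le_trans (cc_bound hV)).
  by rewrite ler_wpM2r ?(S0_ge0 game).
rewrite -(@ler_pM2l _ 2) ?ltr0n // e2.
apply: le_trans (lerD (lerD (lerD bc b1) b2) b3) _.
rewrite -subr_ge0.
have -> : 2 * (K2 * t) - (2 * (t * S0) + (K1 + 1) * t + (K1 + 1) * t + (K1 + 1) * t)
   = (K1 + 1) * t by rewrite /K2; ring.
by apply: mulr_ge0; [exact: addr_ge0 K1ge ler01 | exact: ltW].
Qed.

Lemma strat_main :
  eps_representation V (rho_norm lam) F (Cst * 4.-root eps) /\
  (sync_strategy E F -> forall i a, frob (F i a *m lam - lam *m F i a) <= Cst * sqrtC eps).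
Proof.
split; last exact: sync_part.
set r := 4.-root eps.
have r0 : 0 <= r by rewrite rootC_ge0 // ltW.
have Cr0 : 0 <= Cst * r by rewrite mulr_ge0 // ltW // (Cst_gt0 game).
have zero : forall M, M = 0 -> rho_norm lam M <= Cst * r.
  move=> M ->; change (sqrtC (ip (0 *m lam) (0 *m lam)) <= Cst * r).
  by rewrite mul0mx ip0 sqrtC0.
have sr : sqrtC (sqrtC eps) = r.
  have e4 : eps = r ^+ 4 by rewrite /r rootCK.
  rewrite e4 (_ : r ^+ 4 = (r ^+ 2) ^+ 2); last by rewrite -exprM.
  by rewrite sqrCK ?exprn_ge0 // sqrCK.
split; [|split; [|split]].
- by move=> i a; apply: zero; rewrite (FF hF) subrr.
- by move=> i a; apply: zero; rewrite (Fh hF) subrr.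
- by move=> i; apply: zero; rewrite (Fs hF) subrr.
move=> i j a b hV.
change (sqrtC (ip (F i a *m F j b *m lam) (F i a *m F j b *m lam)) <= Cst * r).
apply: le_trans (_ : _ <= sqrtC (K2 * sqrtC eps)) _.
  have se : 0 <= sqrtC eps by rewrite sqrtC_ge0 eps_ge0.
  have K2e : 0 <= K2 * sqrtC eps := mulr_ge0 (ltW (K2_gt0 game)) se.
  rewrite ler_sqrtC ?nnegrE ?ip_ge0 ?K2e //.
  exact: X_bound.
rewrite sqrtCM ?nnegrE ?sqrtC_ge0 ?eps_ge0 ?(ltW (K2_gt0 game)) // sr.
by rewrite ler_wpM2r // /Cst lerDr sqrtC_ge0 (K1_ge0 game).
Qed.

End Final.


Theorem mainTheorem8 (R : realType) (I A : finType)
    (eta : I -> I -> R[i]) (V : A -> A -> I -> I -> bool) :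
  synchronous_game eta V ->
  exists Cst : R[i], 0 < Cst /\
    forall (eps : R[i]), 0 < eps -> eps <= 1 ->
    forall (n : nat) (E F : I -> A -> 'M[R[i]]_n) (lam : 'M[R[i]]_n),
      quantum_strategy E F lam ->
      eps_perfect eta V E F lam eps ->
      eps_representation V (rho_norm lam) F (Cst * 4.-root eps) /\
      (sync_strategy E F ->
        forall i a, frob (F i a *m lam - lam *m F i a) <= Cst * sqrtC eps).
Proof.
move=> game; exists (Cst A eta); split; first exact: (Cst_gt0 game).
move=> eps eps0 eps1 n E F lam [hE [hF [[hlam _] htr]]] hperf.
exact: (strat_main game hE hF hlam htr eps0 eps1 hperf).
Qed.
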